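(* Let $N \ge 1$ be an integer and let $(X_1, X_2, \dots, X_N)$ be a time-homogeneous Markov chain on the two-state space $\{S_0, S_1\}$ with initial distribution $\mathbb{P}(X_1 = S_0) = p_0$, $\mathbb{P}(X_1 = S_1) = p_1$ (where $p_0,p_1\ge 0$, $p_0+p_1=1$) and transition probabilities $p_{ij} = \mathbb{P}(X_{t+1} = S_j \mid X_t = S_i)$ for $i,j \in \{0,1\}$ (so $p_{00}+p_{01}=1$ and $p_{10}+p_{11}=1$). Let $N_1 = \#\{t \in \{1,\dots,N\} : X_t = S_1\}$ be the number of visits to $S_1$ (the initial state counts as a visit). Then for every integer $k$ with $0 \le k \le N$, $$\mathbb{P}(N_1 = k) = p_1\, \mathbb{P}_1(k,N \mid S_1) + p_0\, \mathbb{P}_2(k,N \mid S_0),$$ where $$\mathbb{P}_1(k,N\mid S_1) = \begin{cases} 0 & k=0,\\[2pt] \displaystyle\sum_{j=1}^{c_1(k,N)} \binom{k-1}{j-1} p_{11}^{k-j} p_{10}^{j} \binom{N-k-1}{j-1} p_{01}^{j-1} p_{00}^{N-k-j} + \sum_{j=1}^{c_2(k,N)} \binom{k-1}{j} p_{11}^{k-j-1} p_{10}^{j} \binom{N-k-1}{j-1} p_{01}^{j} p_{00}^{N-k-j} & 0<k<N,\\[2pt] p_{11}^{N-1} & k=N,\end{cases}$$ $$\mathbb{P}_2(k,N\mid S_0) = \begin{cases} p_{00}^{N-1} & k=0,\\[2pt] \displaystyle\sum_{j=1}^{c_1(k,N)} \binom{k-1}{j-1} p_{11}^{k-j} p_{10}^{j-1}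 \binom{N-k-1}{j-1} p_{01}^{j} p_{00}^{N-k-j} + \sum_{j=1}^{c_3(k,N)} \binom{k-1}{j-1} p_{11}^{k-j} p_{10}^{j} \binom{N-k-1}{j} p_{01}^{j} p_{00}^{N-k-j-1} & 0<k<N,\\[2pt] 0 & k=N,\end{cases}$$ with $c_1(k,N) = \min(k, N-k)$, $c_2(k,N) = \min(k-1, N-k)$, $c_3(k,N) = \min(k, N-k-1)$ (an empty sum is $0$, and $0^0 = 1$).
   Context: The chain consists of $N$ states $X_1,\dots,X_N$: the initial state $X_1$ is drawn from $(p_0,p_1)$ and is followed by $N-1$ transitions. $\mathbb{P}_1(k,N\mid S_1)$ is the probability that $N_1=k$ given $X_1=S_1$, and $\mathbb{P}_2(k,N\mid S_0)$ is the probability that $N_1=k$ given $X_1=S_0$; the displayed formulas give their explicit values. *)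

(* Defs.v *)
(* States: false = S_0, true = S_1. *)
From mathcomp Require Import all_boot all_order all_algebra.
Set Implicit Arguments. Unset Strict Implicit. Unset Printing Implicit Defensive.
Import Order.TTheory GRing.Theory Num.Theory.
Local Open Scope ring_scope.

Section MC.
Variable R : realFieldType.
Variables (p0 p1 p00 p01 p10 p11 : R).

Definition init_prob (b : bool) : R := if b then p1 else p0.

Definition trans_prob (a b : bool) : R :=
  match a, b with
  | false, false => p00 | false, true => p01
  | true, false => p10 | true, true => p11
  end.

Fixpoint trans_path (a : bool) (s : seq bool) : R :=
  if s is b :: t then trans_prob a b * trans_path b t else 1.

Definition path_prob (s : seq bool) : R :=
  if s is a :: t then init_prob a * trans_path a t else 1.

Definition prob_N1 (N k : nat) : R :=
  \sum_(x : N.-tuple bool | count id x == k) path_prob x.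

Definition c1 (k N : nat) : nat := minn k (N - k).
Definition c2 (k N : nat) : nat := minn (k - 1) (N - k).
Definition c3 (k N : nat) : nat := minn k (N - k - 1).

Definition P1 (k N : nat) : R :=
  if k == 0%N then 0
  else if k == N then p11 ^+ (N - 1)
  else \sum_(1 <= j < (c1 k N).+1)
         ('C(k - 1, j - 1))%:R * p11 ^+ (k - j) * p10 ^+ j *
         ('C(N - k - 1, j - 1))%:R * p01 ^+ (j - 1) * p00 ^+ (N - k - j)
     + \sum_(1 <= j < (c2 k N).+1)
         ('C(k - 1, j))%:R * p11 ^+ (k - j - 1) * p10 ^+ j *
         ('C(N - k - 1, j - 1))%:R * p01 ^+ j * p00 ^+ (N - k - j).

Definition P2 (k N : nat) : R :=
  if k == 0%N then p00 ^+ (N - 1)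
  else if k == N then 0
  else \sum_(1 <= j < (c1 k N).+1)
         ('C(k - 1, j - 1))%:R * p11 ^+ (k - j) * p10 ^+ (j - 1) *
         ('C(N - k - 1, j - 1))%:R * p01 ^+ j * p00 ^+ (N - k - j)
     + \sum_(1 <= j < (c3 k N).+1)
         ('C(k - 1, j - 1))%:R * p11 ^+ (k - j) * p10 ^+ j *
         ('C(N - k - 1, j))%:R * p01 ^+ j * p00 ^+ (N - k - j - 1).

End MC.

(* Main.v *)
Require Import Defs.
From mathcomp Require Import all_boot all_order all_algebra.
From mathcomp Require Import ring lra zify.
Set Implicit Arguments. Unset Strict Implicit. Unset Printing Implicit Defensive.
Import Order.TTheory GRing.Theory Num.Theory.
Local Open Scope ring_scope.
Section S.
Variable R : realFieldType.
Lemma tuple_split n (F : n.+1.-tuple bool -> R) (P : pred (n.+1.-tuple bool)) :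
 \sum_(x : n.+1.-tuple bool | P x) F x = \sum_(b : bool) \sum_(t : n.-tuple bool | P [tuple of b :: t]) F [tuple of b :: t].
Proof.
rewrite pair_big_dep /=.
rewrite (reindex (fun p : bool * n.-tuple bool => [tuple of p.1 :: p.2])) //=.
exists (fun t : n.+1.-tuple bool => (thead t, [tuple of behead t])).
  by case=> b t _ /=; rewrite theadE; congr pair; apply: val_inj.
by move=> t _ /=; rewrite [RHS]tuple_eta.
Qed.
Variables (p0 p1 p00 p01 p10 p11 : R).
Definition T a n k := \sum_(x : n.-tuple bool | count id x == k) trans_path p00 p01 p10 p11 a x.
Lemma T_rec a n k : T a n.+1 k = trans_prob p00 p01 p10 p11 a false * T false n k +
   trans_prob p00 p01 p10 p11 a true * (if k is k'.+1 then T true n k' else 0).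
Proof.
rewrite /T tuple_split big_bool /= addrC; congr (_ + _).
  by rewrite big_distrr.
case: k => [|k]; first by rewrite big_pred0 ?mulr0.
by rewrite big_distrr.
Qed.
Lemma T0 a k : T a 0 k = if k == 0%N then 1 else 0.
Proof.
rewrite /T; case: k => [|k] /=.
  rewrite (big_pred1 [tuple]) // => x; rewrite tuple0 /=; by [].
by rewrite big_pred0 // => x; rewrite tuple0.
Qed.
Lemma T_gt a n k : (n < k)%N -> T a n k = 0.
Proof.
elim: n a k => [|n IH] a k hk; first by rewrite T0; case: k hk.
rewrite T_rec IH 1?ltnW //; case: k hk => // k hk; rewrite IH //; ring.
Qed.
Lemma T_false0 m : T false m 0 = p00 ^+ m.
Proof. elim: m => [|m IH]; first by rewrite T0. by rewrite T_rec IH /= exprS; ring. Qed.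
Lemma T_truekk k : T true k k = p11 ^+ k.
Proof. elim: k => [|k IH]; first by rewrite T0. by rewrite T_rec IH T_gt //= exprS; ring. Qed.

Definition z := p10 * p01.
Definition u k m i := ('C(k,i) * 'C(m,i))%:R * p11 ^+ (k - i) * z ^+ i * p00 ^+ (m - i).
Definition v k m i := ('C(k,i.+1) * 'C(m,i))%:R * p11 ^+ (k - i.+1) * z ^+ i * p00 ^+ (m - i).
Definition w k m i := ('C(k,i) * 'C(m,i.+1))%:R * p11 ^+ (k - i) * z ^+ i * p00 ^+ (m - i.+1).
Definition U B k m := \sum_(i < B) u k m i.
Definition V B k m := \sum_(i < B) v k m i.
Definition W B k m := \sum_(i < B) w k m i.

Lemma v_rec k m i : v k.+1 m i = p11 * v k m i + u k m i.
Proof.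
rewrite /v /u binS mulnDl natrD mulrDl subSS.
case: (ltnP i k) => h.
  have -> : (k - i = (k - i.+1).+1)%N by lia.
  rewrite exprS; ring.
rewrite (bin_small (n:=k) (m:=i.+1)) // mul0n !mul0r ?add0r ?addr0 ?mulr0 ?add0r ?addr0.
by [].
Qed.
Lemma w_rec k m i : w k m.+1 i = p00 * w k m i + u k m i.
Proof.
rewrite /w /u binS mulnDr natrD mulrDl subSS.
case: (ltnP i m) => h.
  have -> : (m - i = (m - i.+1).+1)%N by lia.
  rewrite exprS; ring.
rewrite (bin_small (n:=m) (m:=i.+1)) // muln0 !mul0r ?add0r ?addr0 ?mulr0 ?add0r ?addr0.
by [].
Qed.
Lemma u_recS k m i : u k.+1 m i.+1 = p11 * u k m i.+1 + z * w k m i.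
Proof.
rewrite /u /w binS mulnDl natrD mulrDl subSS.
case: (ltnP i k) => h.
  have -> : (k - i = (k - i.+1).+1)%N by lia.
  rewrite !exprS; ring.
rewrite (bin_small (n:=k) (m:=i.+1)) // mul0n !mul0r ?add0r ?addr0 ?mulr0 ?add0r ?addr0.
rewrite !exprS; ring.
Qed.
Lemma u_recS' k m i : u k m.+1 i.+1 = p00 * u k m i.+1 + z * v k m i.
Proof.
rewrite /u /v binS mulnDr natrD mulrDl subSS.
case: (ltnP i m) => h.
  have -> : (m - i = (m - i.+1).+1)%N by lia.
  rewrite !exprS; ring.
rewrite (bin_small (n:=m) (m:=i.+1)) // muln0 !mul0r ?add0r ?addr0 ?mulr0 ?add0r ?addr0.
rewrite !exprS; ring.
Qed.
Lemma U_rec B k m : (k < B)%N -> U B.+1 k.+1 m = p11 * U B.+1 k m + z * W B.+1 k m.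
Proof.
move=> hk; rewrite /U /W big_ord_recl [in RHS]big_ord_recl big_ord_recr /=.
rewrite [w k m B]/w (bin_small (n:=k) (m:=B)) // mul0n !mul0r addr0.
under eq_bigr do rewrite /bump /= add1n u_recS.
under [in RHS]eq_bigr do rewrite /bump /= add1n.
rewrite big_split /= mulrDr -!big_distrr /= /u !subn0 !bin0 exprS; ring.
Qed.
Lemma U_rec' B k m : (k < B)%N -> U B.+1 k m.+1 = p00 * U B.+1 k m + z * V B.+1 k m.
Proof.
move=> hk; rewrite /U /V big_ord_recl [in RHS]big_ord_recl big_ord_recr /=.
rewrite [v k m B]/v (@bin_small k B.+1); last by apply: ltnW. rewrite mul0n !mul0r addr0.
under eq_bigr do rewrite /bump /= add1n u_recS'.
under [in RHS]eq_bigr do rewrite /bump /= add1n.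
rewrite big_split /= mulrDr -!big_distrr /= /u !subn0 !bin0 exprS; ring.
Qed.
Lemma V_rec B k m : V B k.+1 m = p11 * V B k m + U B k m.
Proof. by rewrite /V /U big_distrr -big_split; apply: eq_bigr => i _; rewrite v_rec. Qed.
Lemma W_rec B k m : W B k m.+1 = p00 * W B k m + U B k m.
Proof. by rewrite /W /U big_distrr -big_split; apply: eq_bigr => i _; rewrite w_rec. Qed.
Lemma U0m B m : U B.+1 0 m = p00 ^+ m.
Proof.
rewrite /U big_ord_recl big1 ?addr0.
  by rewrite /u !bin0 !subn0 !expr0; ring.
by move=> i _; rewrite /u bin0n mul0n mul0r !mul0r.
Qed.
Lemma Uk0 B k : U B.+1 k 0 = p11 ^+ k.
Proof.
rewrite /U big_ord_recl big1 ?addr0.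
  by rewrite /u !bin0 !subn0 !expr0; ring.
by move=> i _; rewrite /u bin0n muln0 mul0r !mul0r.
Qed.
Lemma V0m B m : V B 0 m = 0.
Proof. by rewrite /V big1 // => i _; rewrite /v bin0n mul0n mul0r !mul0r. Qed.
Lemma Wk0 B k : W B k 0 = 0.
Proof. by rewrite /W big1 // => i _; rewrite /w bin0n muln0 mul0r !mul0r. Qed.
Definition Ac B k m := p10 * (U B k m + p01 * V B k m).
Definition Bc B k m := p01 * (U B k m + p10 * W B k m).
Lemma closed s : forall k m, (k + m = s)%N -> forall B, (k + m < B)%N ->
  T true (k + m).+1 k = Ac B.+1 k m /\ T false (k + m).+1 k.+1 = Bc B.+1 k m.
Proof.
elim: s => [|s IH] k m hs B hB; split.
- have [-> ->] : k = 0%N /\ m = 0%N by lia.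
  by rewrite ?addn0 T_rec T_false0 /Ac U0m V0m /=; ring.
- have [-> ->] : k = 0%N /\ m = 0%N by lia.
  by rewrite ?addn0 T_rec T_truekk T_gt // /Bc Uk0 Wk0 /=; ring.
- case: k hs hB => [|k] hs hB.
    by rewrite ?addn0 T_rec T_false0 /Ac U0m V0m /=; ring.
  have [IA IB] := IH k m ltac:(lia) B ltac:(lia).
  rewrite addSn T_rec IA IB /Ac /Bc /= U_rec; last by lia.
  rewrite V_rec /z; ring.
- case: m hs hB => [|m] hs hB.
    by rewrite ?addn0 T_rec T_truekk T_gt // /Bc Uk0 Wk0 /=; ring.
  have [IA IB] := IH k m ltac:(lia) B ltac:(lia).
  rewrite addnS T_rec IA IB /Ac /Bc /= U_rec'; last by lia.
  rewrite W_rec /z; ring.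
Qed.
Lemma sum_shift (F : nat -> R) (G : nat -> R) c Bb :
  (c <= Bb)%N -> (forall i, F i.+1 = G i) -> (forall i, (c <= i)%N -> G i = 0) ->
  \sum_(1 <= j < c.+1) F j = \sum_(i < Bb) G i.
Proof.
move=> hc hFG hG; rewrite big_add1 /= big_mkord (big_ord_widen Bb (fun i => F i.+1) hc) big_mkcond /=.
apply: eq_bigr => i _; case: ifP => h; first exact: hFG.
by rewrite hG // leqNgt h.
Qed.
Lemma prob_T n k : prob_N1 p0 p1 p00 p01 p10 p11 n.+1 k =
  p1 * (if k is k'.+1 then T true n k' else 0) + p0 * T false n k.
Proof.
rewrite /prob_N1 tuple_split big_bool /=; congr (_ + _).
  case: k => [|k]; first by rewrite big_pred0 ?mulr0.
  by rewrite /T big_distrr.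
by rewrite /T big_distrr.
Qed.
End S.

Unset Implicit Arguments.
Theorem theorem1 (R : realFieldType) (p0 p1 p00 p01 p10 p11 : R) (N k : nat) :
  (1 <= N)%N ->
  0 <= p0 -> 0 <= p1 -> p0 + p1 = 1 ->
  0 <= p00 -> 0 <= p01 -> 0 <= p10 -> 0 <= p11 ->
  p00 + p01 = 1 -> p10 + p11 = 1 ->
  (k <= N)%N ->
  prob_N1 p0 p1 p00 p01 p10 p11 N k =
    p1 * P1 p00 p01 p10 p11 k N + p0 * P2 p00 p01 p10 p11 k N.
Proof.
move=> hN _ _ _ _ _ _ _ _ _ hk.
case: N hN hk => // n _ hk.
rewrite prob_T.
case: k hk => [|k] hk.
  by rewrite /P1 /P2 /= T_false0 subn1 /=; ring.
case: (ltnP k n) => hkn; last first.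
  have e : k = n by lia.
  subst k; rewrite /P1 /P2 /= eqxx T_truekk T_gt // subn1 /=; ring.
pose m := (n - k - 1)%N.
have hn : n = (k + m).+1 by rewrite /m; lia.
rewrite hn.
have [-> ->] := closed p00 p01 p10 p11 (erefl (k + m)%N) (B := (k + m).+1) (ltnSn _).
rewrite /P1 /P2 /=.
have -> : (k.+1 == (k + m).+2)%N = false by apply/negbTE; lia.
rewrite /Ac /Bc.
congr (p1 * _ + p0 * _); rewrite mulrDr; congr (_ + _);
  rewrite /U /V /W ?mulrA big_distrr /=.
- symmetry; apply: (sum_shift (G := fun i => p10 * u p00 p01 p10 p11 k m i)); first by rewrite /c1 ; lia.
    move=> i; rewrite /u /z.
    have -> : ((k + m).+2 - k.+1 - 1 = m)%N by lia.
    have -> : (k.+1 - i.+1 = k - i)%N by lia.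
    have -> : ((k + m).+2 - k.+1 - i.+1 = m - i)%N by lia.
    rewrite !subn1 /= natrM exprMn !exprS; ring.
  move=> i hi; rewrite /u; move: hi; rewrite /c1 => hi.
  case: (ltnP k i) => h; first by rewrite bin_small // mul0n !mul0r mulr0.
  by rewrite (@bin_small m i) ?muln0 ?mul0r ?mulr0 //; lia.
- symmetry; apply: (sum_shift (G := fun i => p10 * p01 * v p00 p01 p10 p11 k m i)); first by rewrite /c2 ; lia.
    move=> i; rewrite /v /z.
    have -> : ((k + m).+2 - k.+1 - 1 = m)%N by lia.
    have -> : (k.+1 - i.+1 - 1 = k - i.+1)%N by lia.
    have -> : ((k + m).+2 - k.+1 - i.+1 = m - i)%N by lia.
    rewrite !subn1 /= natrM exprMn !exprS; ring.
  move=> i hi; rewrite /v; move: hi; rewrite /c2 => hi.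
  case: (ltnP k i.+1) => h; first by rewrite bin_small // mul0n !mul0r mulr0.
  by rewrite (@bin_small m i) ?muln0 ?mul0r ?mulr0 //; lia.
- symmetry; apply: (sum_shift (G := fun i => p01 * u p00 p01 p10 p11 k m i)); first by rewrite /c1 ; lia.
    move=> i; rewrite /u /z.
    have -> : ((k + m).+2 - k.+1 - 1 = m)%N by lia.
    have -> : (k.+1 - i.+1 = k - i)%N by lia.
    have -> : ((k + m).+2 - k.+1 - i.+1 = m - i)%N by lia.
    rewrite !subn1 /= natrM exprMn !exprS; ring.
  move=> i hi; rewrite /u; move: hi; rewrite /c1 => hi.
  case: (ltnP k i) => h; first by rewrite bin_small // mul0n !mul0r mulr0.
  by rewrite (@bin_small m i) ?muln0 ?mul0r ?mulr0 //; lia.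
- symmetry; apply: (sum_shift (G := fun i => p01 * p10 * w p00 p01 p10 p11 k m i)); first by rewrite /c3 ; lia.
    move=> i; rewrite /w /z.
    have -> : ((k + m).+2 - k.+1 - 1 = m)%N by lia.
    have -> : (k.+1 - i.+1 = k - i)%N by lia.
    have -> : ((k + m).+2 - k.+1 - i.+1 - 1 = m - i.+1)%N by lia.
    rewrite !subn1 /= natrM exprMn !exprS; ring.
  move=> i hi; rewrite /w; move: hi; rewrite /c3 => hi.
  case: (ltnP k i) => h; first by rewrite bin_small // mul0n !mul0r mulr0.
  by rewrite (@bin_small m i.+1) ?muln0 ?mul0r ?mulr0 //; lia.
Qed.
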